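(* Let $\vec G$ be a directed graph whose underlying graph $G$ is bipartite (and simple), and let $M$ be a set of edges of $\vec G$ such that for every vertex $v$ of $\vec G$ there is at least one edge of $M$ directed into $v$. If $\vec G$ admits an $M$-complete $\{P_5,T_5\}$-decomposition, then $\vec G$ (and hence $G$) admits a decomposition into paths of length $5$.
   Context: A directed graph is a graph together with an orientation of its edges; edges are ordered pairs $(a,b)$ written $ab$ (directed from $a$ to $b$). Trails and paths in a directed graph are trails and paths of the underlying undirected graph (orientations ignored). $P_5$ is the path of length $5$ (five edges). $T_5$ is the unique bipartite trail of length $5$ that is not a path, i.e. a trail $v_0v_1v_2v_3v_4v_5$ with all of $v_0,\dots,v_4$ distinct and $v_5=v_1$. A $\{P_5,T_5\}$-decomposition of $\vec G$ is a partition of its edge set into edge sets of subgraphs each of which is a copy of $P_5$ or of $T_5$. Given such a decomposition $\mathcal D$, an edge $ab$ is inward in $\mathcal D$ if, for the element $T\in\mathcal D$ containing $ab$, $d_T(a)=1$. $\mathcal D$ is $M$-complete if every edge of $M$ is inward in $\mathcal D$. *)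

(* Defs.v *)
From mathcomp Require Import all_boot.
Set Implicit Arguments. Unset Strict Implicit. Unset Printing Implicit Defensive.

(* A directed graph on a finite vertex type V is a relation D : rel V;
   D a b means the (directed) edge ab, from a to b, is present. *)

(* Underlying graph is simple: no loops, and no pair of opposite arcs
   (which would give parallel edges in the underlying graph). *)
Definition simple_digraph (V : finType) (D : rel V) : Prop :=
  (forall a, ~~ D a a) /\ (forall a b, D a b -> ~~ D b a).

Definition bipartite_digraph (V : finType) (D : rel V) : Prop :=
  exists c : V -> bool, forall a b, D a b -> c a != c b.

(* A trail of length 5 is given by its vertex sequence v_0 ... v_5. *)
Definition walk5 (V : finType) := {ffun 'I_6 -> V}.
Definition wv (V : finType) (w : walk5 V) (i : nat) : V := w (inord i).

Definition edges_in (V : finType) (D : rel V) (w : walk5 V) : Prop :=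
  forall i, i < 5 -> D (wv w i) (wv w i.+1) || D (wv w i.+1) (wv w i).

Definition isP5 (V : finType) (D : rel V) (w : walk5 V) : Prop :=
  edges_in D w /\ (forall i j, i < 6 -> j < 6 -> wv w i = wv w j -> i = j).

Definition isT5 (V : finType) (D : rel V) (w : walk5 V) : Prop :=
  edges_in D w /\ (forall i j, i < 5 -> j < 5 -> wv w i = wv w j -> i = j)
  /\ wv w 5 = wv w 1.

Definition step_is (V : finType) (w : walk5 V) (i : nat) (a b : V) : bool :=
  ((wv w i == a) && (wv w i.+1 == b)) || ((wv w i == b) && (wv w i.+1 == a)).

Definition uses (V : finType) (w : walk5 V) (a b : V) : nat :=
  count (fun i => step_is w i a b) (iota 0 5).

Definition deg_in (V : finType) (w : walk5 V) (x : V) : nat :=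
  count (fun i => (wv w i == x) || (wv w i.+1 == x)) (iota 0 5).

Definition partitions (V : finType) (D : rel V) (F : seq (walk5 V)) : Prop :=
  forall a b, D a b -> sumn (map (fun w => uses w a b) F) = 1.

Definition PT_decomposition (V : finType) (D : rel V) (F : seq (walk5 V)) : Prop :=
  (forall w, w \in F -> isP5 D w \/ isT5 D w) /\ partitions D F.

Definition P5_decomposition (V : finType) (D : rel V) (F : seq (walk5 V)) : Prop :=
  (forall w, w \in F -> isP5 D w) /\ partitions D F.

(* edge ab is inward: in the element T containing ab, d_T(a) = 1 *)
Definition M_complete (V : finType) (D M : rel V) (F : seq (walk5 V)) : Prop :=
  forall a b, M a b -> forall w, w \in F -> 0 < uses w a b -> deg_in w a = 1.

(* Main.v *)
Require Import Defs.
From mathcomp Require Import all_boot zify.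

Arguments wv : simpl never.

Section Basics.
Set Implicit Arguments. Unset Strict Implicit.
Variable V : finType.
Implicit Types (w X W P Y : walk5 V) (a b x y : V) (F G : seq (walk5 V)).

Definition mk6 (a0 a1 a2 a3 a4 a5 : V) : walk5 V :=
  [ffun i : 'I_6 => nth a0 [:: a0; a1; a2; a3; a4; a5] i].

Lemma wv_mk6 a0 a1 a2 a3 a4 a5 i : i < 6 ->
  wv (mk6 a0 a1 a2 a3 a4 a5) i = nth a0 [:: a0; a1; a2; a3; a4; a5] i.
Proof. by move=> Hi; rewrite /wv ffunE inordK. Qed.

Lemma wvE0 a0 a1 a2 a3 a4 a5 : wv (mk6 a0 a1 a2 a3 a4 a5) 0 = a0. Proof. by rewrite wv_mk6. Qed.
Lemma wvE1 a0 a1 a2 a3 a4 a5 : wv (mk6 a0 a1 a2 a3 a4 a5) 1 = a1. Proof. by rewrite wv_mk6. Qed.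
Lemma wvE2 a0 a1 a2 a3 a4 a5 : wv (mk6 a0 a1 a2 a3 a4 a5) 2 = a2. Proof. by rewrite wv_mk6. Qed.
Lemma wvE3 a0 a1 a2 a3 a4 a5 : wv (mk6 a0 a1 a2 a3 a4 a5) 3 = a3. Proof. by rewrite wv_mk6. Qed.
Lemma wvE4 a0 a1 a2 a3 a4 a5 : wv (mk6 a0 a1 a2 a3 a4 a5) 4 = a4. Proof. by rewrite wv_mk6. Qed.
Lemma wvE5 a0 a1 a2 a3 a4 a5 : wv (mk6 a0 a1 a2 a3 a4 a5) 5 = a5. Proof. by rewrite wv_mk6. Qed.
Definition wvE := (wvE0, wvE1, wvE2, wvE3, wvE4, wvE5).

Lemma mk6_wv w : w = mk6 (wv w 0) (wv w 1) (wv w 2) (wv w 3) (wv w 4) (wv w 5).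
Proof.
apply/ffunP => i; rewrite ffunE.
have Hi := ltn_ord i.
have -> : i = inord (nat_of_ord i) by apply/val_inj; rewrite /= inordK.
rewrite inordK //.
by case: (nat_of_ord i) Hi => [|[|[|[|[|[|m]]]]]].
Qed.

Definition st x y a b : bool := ((x == a) && (y == b)) || ((x == b) && (y == a)).

Lemma usesE w a b : uses w a b =
  st (wv w 0) (wv w 1) a b + st (wv w 1) (wv w 2) a b + st (wv w 2) (wv w 3) a b
  + st (wv w 3) (wv w 4) a b + st (wv w 4) (wv w 5) a b.
Proof. by rewrite /uses /step_is /st /= addn0 !addnA. Qed.

Lemma degE w x : deg_in w x =
  ((wv w 0 == x) || (wv w 1 == x)) + ((wv w 1 == x) || (wv w 2 == x))
  + ((wv w 2 == x) || (wv w 3 == x)) + ((wv w 3 == x) || (wv w 4 == x))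
  + ((wv w 4 == x) || (wv w 5 == x)).
Proof. by rewrite /deg_in /= addn0 !addnA. Qed.

Lemma stC x y a b : st x y a b = st y x a b.
Proof. by rewrite /st; case: (x == a); case: (x == b); case: (y == a); case: (y == b). Qed.
Lemma stS x y a b : st x y a b = st x y b a.
Proof. by rewrite /st; case: (x == a); case: (x == b); case: (y == a); case: (y == b). Qed.

Lemma usesC w a b : uses w a b = uses w b a.
Proof. by rewrite !usesE !(stS _ _ a b). Qed.


Variable D : rel V.

Lemma P5_eq w i j : isP5 D w -> i < 6 -> j < 6 -> (wv w i == wv w j) = (i == j).
Proof. by case=> _ Hinj Hi Hj; apply/eqP/eqP => [/Hinj|->]; auto. Qed.

Definition t5i (i : nat) := if i == 5 then 1 else i.

Lemma T5_eq w i j : isT5 D w -> i < 6 -> j < 6 ->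
  (wv w i == wv w j) = (t5i i == t5i j).
Proof.
case=> _ [Hinj H51] Hi Hj.
have Ht : forall k, k < 6 -> wv w k = wv w (t5i k) /\ t5i k < 5.
  by move=> k; rewrite /t5i; case: eqP => [->|Hk] //= Hk6; split => //; rewrite ltn_neqAle; apply/andP; split; [apply/eqP|]. 
have [Ei Hi'] := Ht i Hi; have [Ej Hj'] := Ht j Hj.
rewrite Ei Ej; apply/eqP/eqP => [/Hinj|->]; auto.
Qed.

Lemma uses_pos0 w a b : 0 < uses w a b -> exists2 i, i < 5 & step_is w i a b.
Proof.
rewrite /uses -has_count => /hasP [i]; rewrite mem_iota add0n => /andP [_ Hi] H.
by exists i.
Qed.

Lemma endP5 w a b : isP5 D w -> deg_in w a = 1 -> 0 < uses w a b ->
  (a = wv w 0 /\ b = wv w 1) \/ (a = wv w 5 /\ b = wv w 4).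
Proof.
move=> HP Hd /uses_pos0 [i Hi].
rewrite /step_is => /orP [] /andP [/eqP Ea /eqP Eb]; subst a b;
  case: i Hi Hd => [|[|[|[|[|i]]]]] //= _; rewrite degE !(P5_eq HP) //=; auto.
Qed.

Lemma endT5 w a b : isT5 D w -> deg_in w a = 1 -> 0 < uses w a b ->
  a = wv w 0 /\ b = wv w 1.
Proof.
move=> HP Hd /uses_pos0 [i Hi].
have H51 : wv w 5 = wv w 1 by case: HP => _ [].
rewrite /step_is => /orP [] /andP [/eqP Ea /eqP Eb]; subst a b;
  case: i Hi Hd => [|[|[|[|[|i]]]]] //= _; rewrite degE !(T5_eq HP) //=; auto.
Qed.

Lemma degP5_0 w : isP5 D w -> deg_in w (wv w 0) = 1.
Proof. by move=> HP; rewrite degE !(P5_eq HP). Qed.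
Lemma degP5_5 w : isP5 D w -> deg_in w (wv w 5) = 1.
Proof. by move=> HP; rewrite degE !(P5_eq HP). Qed.
Lemma degT5_0 w : isT5 D w -> deg_in w (wv w 0) = 1.
Proof. by move=> HP; rewrite degE !(T5_eq HP). Qed.

Lemma usesi w i : i < 5 -> 0 < uses w (wv w i) (wv w i.+1).
Proof.
move=> Hi; rewrite /uses -has_count; apply/hasP; exists i.
  by rewrite mem_iota add0n.
by rewrite /step_is !eqxx.
Qed.

Lemma isP5_mk6 a0 a1 a2 a3 a4 a5 :
  uniq [:: a0; a1; a2; a3; a4; a5] ->
  D a0 a1 || D a1 a0 -> D a1 a2 || D a2 a1 -> D a2 a3 || D a3 a2 ->
  D a3 a4 || D a4 a3 -> D a4 a5 || D a5 a4 ->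
  isP5 D (mk6 a0 a1 a2 a3 a4 a5).
Proof.
move=> Hu H0 H1 H2 H3 H4; split.
  by move=> [|[|[|[|[|i]]]]] //= _; rewrite !wvE.
move=> i j Hi Hj; rewrite !wv_mk6 // => /eqP.
by rewrite nth_uniq // => /eqP.
Qed.

Lemma isT5_mk6 a0 a1 a2 a3 a4 :
  uniq [:: a0; a1; a2; a3; a4] ->
  D a0 a1 || D a1 a0 -> D a1 a2 || D a2 a1 -> D a2 a3 || D a3 a2 ->
  D a3 a4 || D a4 a3 -> D a4 a1 || D a1 a4 ->
  isT5 D (mk6 a0 a1 a2 a3 a4 a1).
Proof.
move=> Hu H0 H1 H2 H3 H4; split; [|split].
- by move=> [|[|[|[|[|i]]]]] //= _; rewrite !wvE.
- move=> i j Hi Hj.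
  have E : forall k, k < 5 -> wv (mk6 a0 a1 a2 a3 a4 a1) k = nth a0 [:: a0; a1; a2; a3; a4] k.
    by move=> [|[|[|[|[|k]]]]] //= _; rewrite !wvE.
  rewrite !E // => /eqP; by rewrite nth_uniq // => /eqP.
- by rewrite !wvE.
Qed.

Lemma uniq_P5 w : isP5 D w ->
  uniq [:: wv w 0; wv w 1; wv w 2; wv w 3; wv w 4; wv w 5].
Proof. by move=> HP; rewrite /= !inE !(P5_eq HP). Qed.

Lemma uniq_T5 w : isT5 D w ->
  uniq [:: wv w 0; wv w 1; wv w 2; wv w 3; wv w 4].
Proof. by move=> HP; rewrite /= !inE !(T5_eq HP). Qed.

Lemma edge_of w a b : isP5 D w \/ isT5 D w -> 0 < uses w a b -> D a b || D b a.
Proof.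
move=> HPT /uses_pos0 [i Hi]; rewrite /step_is.
have He : edges_in D w by case: HPT => [[]|[]].
by case/orP => /andP [/eqP <- /eqP <-]; [|rewrite orbC]; apply: He.
Qed.

Definition suses (F : seq (walk5 V)) a b := sumn (map (fun w => uses w a b) F).

Lemma suses_perm F G a b : perm_eq F G -> suses F a b = suses G a b.
Proof. by move=> H; apply: perm_sumn; apply: perm_map. Qed.

Lemma suses_pos F a b : 0 < suses F a b -> exists2 w, w \in F & 0 < uses w a b.
Proof.
elim: F => [|w F IH] //=; rewrite /suses /= addn_gt0 => /orP [H|H].
  by exists w; rewrite ?inE ?eqxx.
by case: (IH H) => w' Hw' H'; exists w'; rewrite // inE Hw' orbT.
Qed.

Lemma suses_ge F w a b : w \in F -> uses w a b <= suses F a b.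
Proof.
elim: F => [|w' F IH] //=; rewrite inE /suses /= => /orP [/eqP <-|H].
  exact: leq_addr.
exact: leq_trans (IH H) (leq_addl _ _).
Qed.

Lemma part_sym F a b : partitions D F -> (D a b || D b a) -> suses F a b = 1.
Proof.
move=> HF /orP [H|H]; first exact: HF.
by rewrite /suses; under eq_map => w do rewrite usesC; apply: HF.
Qed.

Lemma edge_unique F w1 w2 a b : partitions D F -> w1 \in F -> w2 \in F ->
  (D a b || D b a) -> 0 < uses w1 a b -> 0 < uses w2 a b -> w1 = w2.
Proof.
move=> HF H1 H2 HD U1 U2; apply/eqP; apply/negPn/negP => Hne.
have Hp := perm_to_rem H1.
have H2' : w2 \in rem w1 F by apply: rem_mem => //; rewrite eq_sym.
have := part_sym HF HD; rewrite (suses_perm _ _ Hp) /suses /= => Hs.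
have := suses_ge a b H2'; rewrite /suses; lia.
Qed.

Variable M : rel V.

Definition wt w : nat :=
  if wv w 5 == wv w 1 then (M (wv w 0) (wv w 1)).+1
  else (M (wv w 0) (wv w 1) && M (wv w 5) (wv w 4)).
Definition mu (F : seq (walk5 V)) := sumn (map wt F).

Lemma mu_perm F G : perm_eq F G -> mu F = mu G.
Proof. by move=> H; apply: perm_sumn; apply: perm_map. Qed.

Lemma perm2 F X W : X \in F -> W \in F -> X != W ->
  perm_eq F (X :: W :: rem W (rem X F)).
Proof.
move=> HX HW Hne.
have HW' : W \in rem X F by apply: rem_mem => //; rewrite eq_sym.
apply: perm_trans (perm_to_rem HX) _; rewrite perm_cons.
exact: perm_to_rem.
Qed.

Lemma swap F X W P (X' : walk5 V) :
 PT_decomposition D F -> M_complete D M F -> X \in F -> W \in F -> X != W ->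
 (isP5 D P \/ isT5 D P) -> (isP5 D X' \/ isT5 D X') ->
 (forall a b, uses P a b + uses X' a b = uses X a b + uses W a b) ->
 (forall a b, M a b -> 0 < uses P a b -> deg_in P a = 1) ->
 (forall a b, M a b -> 0 < uses X' a b -> deg_in X' a = 1) ->
 [/\ PT_decomposition D (P :: X' :: rem W (rem X F)),
     M_complete D M (P :: X' :: rem W (rem X F)),
     mu (P :: X' :: rem W (rem X F)) + wt X + wt W = mu F + wt P + wt X' &
     forall w, w \in P :: X' :: rem W (rem X F) -> w = P \/ w = X' \/ w \in F].
Proof.
move=> [HPT HF] HMC HX HW Hne HP HX' Hu MP MX'.
have Hp := perm2 HX HW Hne.
have Hsub : forall w, w \in rem W (rem X F) -> w \in F by move=> w /mem_rem /mem_rem.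
have Hmem : forall w, w \in P :: X' :: rem W (rem X F) -> w = P \/ w = X' \/ w \in F.
  by move=> w; rewrite !inE => /orP [/eqP->|/orP [/eqP->|/Hsub]]; auto.
split => //.
- split.
    by move=> w; rewrite !inE => /orP [/eqP->|/orP [/eqP->|/Hsub /HPT]].
  move=> a b Hab; have := HF a b Hab.
  rewrite -/(suses F a b) (suses_perm _ _ Hp) /suses /=; have := Hu a b; lia.
- move=> a b Mab w; rewrite !inE => /orP [/eqP->|/orP [/eqP->|/Hsub]].
  + exact: MP.
  + exact: MX'.
  + exact: HMC.
- rewrite (mu_perm Hp) /mu /=; lia.
Qed.

Lemma pair_le1 F X W a b : partitions D F -> X \in F -> W \in F -> X != W ->
  (D a b || D b a) -> uses X a b + uses W a b <= 1.
Proof.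
move=> HF HX HW Hne HD; have := part_sym HF HD.
rewrite (suses_perm _ _ (perm2 HX HW Hne)) /suses /=; lia.
Qed.

Lemma newM X W P (X' : walk5 V) :
 (forall a b, M a b -> D a b) ->
 (forall a b, uses P a b + uses X' a b = uses X a b + uses W a b) ->
 (forall a b, D a b -> uses X a b + uses W a b <= 1) ->
 (forall a b, M a b -> 0 < uses X a b + uses W a b ->
    (deg_in P a = 1 /\ 0 < uses P a b) \/ (deg_in X' a = 1 /\ 0 < uses X' a b)) ->
 (forall a b, M a b -> 0 < uses P a b -> deg_in P a = 1) /\
 (forall a b, M a b -> 0 < uses X' a b -> deg_in X' a = 1).
Proof.
move=> MD Hu Hle Hend; split=> a b Mab Hpos.
- have Hs : 0 < uses X a b + uses W a b by rewrite -Hu; lia.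
  have := Hle _ _ (MD _ _ Mab); rewrite -Hu.
  case: (Hend _ _ Mab Hs) => [[]|[_ H]] //; lia.
- have Hs : 0 < uses X a b + uses W a b by rewrite -Hu; lia.
  have := Hle _ _ (MD _ _ Mab); rewrite -Hu.
  case: (Hend _ _ Mab Hs) => [[_ H]|[]] //; lia.
Qed.

Definition link F v y y' := exists2 w, w \in F &
  [/\ isP5 D w, (wv w 1 = y /\ wv w 4 = v) \/ (wv w 4 = y /\ wv w 1 = v) & 0 < uses w v y'].
Definition chainN F v (s : seq V) :=
  forall i, i.+1 < size s -> link F v (nth v s i) (nth v s i.+1).

Lemma P5_notT5 w : isP5 D w -> wv w 5 = wv w 1 -> False.
Proof. by move=> HP /eqP; rewrite (P5_eq HP). Qed.

Lemma chain_notin F v y0 ys Z z : PT_decomposition D F ->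
  chainN F v (y0 :: ys) -> Z \in F -> wv Z 5 = wv Z 1 -> 0 < uses Z v z -> z \notin ys.
Proof.
move=> [HPT HF] Hc HZ HZ5 Hu; apply/negP => Hin.
have Hj : index z ys < size ys by rewrite index_mem.
have := Hc (index z ys) Hj; rewrite /= nth_index //.
case=> w Hw [HP _ Hu'].
have HD := edge_of (HPT _ HZ) Hu.
have Ew := edge_unique HF Hw HZ HD Hu' Hu; subst w.
exact: P5_notT5 HP HZ5.
Qed.

Lemma chain_uniq F v y0 ys Z : PT_decomposition D F ->
  chainN F v (y0 :: ys) -> Z \in F -> wv Z 5 = wv Z 1 -> 0 < uses Z v y0 ->
  uniq (y0 :: ys).
Proof.
move=> [HPT HF] Hc HZ HZ5 Hu.
set s := y0 :: ys.
have H : forall i j, i < j -> j < size s -> nth v s i != nth v s j.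
  elim=> [|i IH] [|j] // Hij Hj.
  - apply/negP => /eqP E.
    have := Hc j Hj; rewrite -E /=; case=> w Hw [HP _ Hu'].
    have HD := edge_of (HPT _ HZ) Hu.
    have Ew := edge_unique HF Hw HZ HD Hu' Hu; subst w.
    exact: P5_notT5 HP HZ5.
  - apply/negP => /eqP E.
    have [w1 Hw1 [HP1 Hpos1 Hu1]] := Hc i (ltn_trans Hij Hj).
    have [w2 Hw2 [HP2 Hpos2 Hu2]] := Hc j Hj.
    rewrite E in Hu1.
    have HD := edge_of (HPT _ Hw2) Hu2.
    have Ew := edge_unique HF Hw1 Hw2 HD Hu1 Hu2; subst w2.
    have Hne : wv w1 1 != wv w1 4 by rewrite (P5_eq HP1).
    have := IH j Hij (ltnW Hj); move/negP; apply.
    case: Hpos1 Hpos2 Hne => [[<- <-]|[<- <-]] [[<- Ev]|[<- Ev]];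
      rewrite ?Ev ?eqxx //.
apply/(uniqP v) => i j Hi Hj E.
case: (ltngtP i j) => // Hij.
- by move: (H i j Hij Hj); rewrite E eqxx.
- by move: (H j i Hij Hi); rewrite E eqxx.
Qed.

Variable c : V -> bool.
Hypothesis Hc : forall a b, D a b -> c a != c b.
Hypothesis MD : forall a b, M a b -> D a b.
Hypothesis Min : forall v, exists u, M u v.
Variable G : Prop.

Lemma col a b : D a b || D b a -> c a != c b.
Proof. by case/orP => /Hc //; rewrite eq_sym. Qed.
Lemma ncol a b : c a != c b -> a != b.
Proof. by apply: contraNneq => ->. Qed.
Lemma neq3 (x y z t : bool) : x != y -> y != z -> z != t -> x != t.
Proof. by case: x; case: y; case: z; case: t. Qed.
Lemma neq5 (x y z t r s : bool) : x != y -> y != z -> z != t -> t != r -> r != s -> x != s.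
Proof. by case: x; case: y; case: z; case: t; case: r; case: s. Qed.

Definition Sk (n k : nat) := forall F x0 v p s q,
  PT_decomposition D F -> M_complete D M F -> mu F = n ->
  mk6 x0 v p s q v \in F ->
  G \/ exists ys, size ys = k /\ chainN F v (p :: ys).


Lemma u60 a0 a1 a2 a3 a4 a5 : 0 < uses (mk6 a0 a1 a2 a3 a4 a5) a0 a1.
Proof. by have := @usesi (mk6 a0 a1 a2 a3 a4 a5) 0 isT; rewrite !wvE. Qed.
Lemma u61 a0 a1 a2 a3 a4 a5 : 0 < uses (mk6 a0 a1 a2 a3 a4 a5) a1 a2.
Proof. by have := @usesi (mk6 a0 a1 a2 a3 a4 a5) 1 isT; rewrite !wvE. Qed.
Lemma u62 a0 a1 a2 a3 a4 a5 : 0 < uses (mk6 a0 a1 a2 a3 a4 a5) a2 a3.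
Proof. by have := @usesi (mk6 a0 a1 a2 a3 a4 a5) 2 isT; rewrite !wvE. Qed.
Lemma u63 a0 a1 a2 a3 a4 a5 : 0 < uses (mk6 a0 a1 a2 a3 a4 a5) a3 a4.
Proof. by have := @usesi (mk6 a0 a1 a2 a3 a4 a5) 3 isT; rewrite !wvE. Qed.
Lemma u64 a0 a1 a2 a3 a4 a5 : 0 < uses (mk6 a0 a1 a2 a3 a4 a5) a4 a5.
Proof. by have := @usesi (mk6 a0 a1 a2 a3 a4 a5) 4 isT; rewrite !wvE. Qed.

Lemma e6 w i : isP5 D w \/ isT5 D w -> i < 5 -> D (wv w i) (wv w i.+1) || D (wv w i.+1) (wv w i).
Proof. by case=> [[H _]|[H _]]; apply: H. Qed.

Ltac split_and := repeat match goal with H : is_true (_ && _) |- _ => case/andP: H => ? ? end.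
Ltac explode H := move: H; rewrite /= !inE !negb_or => H; split_and.
Ltac neqs := solve [assumption | rewrite eq_sym; assumption | done].
Ltac uniqs := rewrite /= !inE !negb_or; repeat (apply/andP; split); try neqs.


Lemma stepA n F x0 v p s q u y2 y3 y4 :
  (forall F', PT_decomposition D F' -> M_complete D M F' -> mu F' < n -> G) ->
  PT_decomposition D F -> M_complete D M F -> mu F = n ->
  mk6 x0 v p s q v \in F -> isT5 D (mk6 x0 v p s q v) ->
  M u p ->
  mk6 u p y2 y3 y4 p \in F -> isT5 D (mk6 u p y2 y3 y4 p) ->
  mk6 x0 v p s q v != mk6 u p y2 y3 y4 p -> G.
Proof.
move=> IHmu HPT HMC Hmu HX HXT Mup HW HWT Hne.
have [HPTF HF] := HPT.
have UX := uniq_T5 HXT; rewrite !wvE in UX; explode UX.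
have UW := uniq_T5 HWT; rewrite !wvE in UW; explode UW.
have eX0 := @e6 _ 0 (HPTF _ HX) isT; rewrite !wvE in eX0.
have eX1 := @e6 _ 1 (HPTF _ HX) isT; rewrite !wvE in eX1.
have eX2 := @e6 _ 2 (HPTF _ HX) isT; rewrite !wvE in eX2.
have eX3 := @e6 _ 3 (HPTF _ HX) isT; rewrite !wvE in eX3.
have eX4 := @e6 _ 4 (HPTF _ HX) isT; rewrite !wvE in eX4.
have eW0 := @e6 _ 0 (HPTF _ HW) isT; rewrite !wvE in eW0.
have eW1 := @e6 _ 1 (HPTF _ HW) isT; rewrite !wvE in eW1.
have eW2 := @e6 _ 2 (HPTF _ HW) isT; rewrite !wvE in eW2.
have eW3 := @e6 _ 3 (HPTF _ HW) isT; rewrite !wvE in eW3.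
have eW4 := @e6 _ 4 (HPTF _ HW) isT; rewrite !wvE in eW4.
have EU : forall a b, 0 < uses (mk6 x0 v p s q v) a b -> 0 < uses (mk6 u p y2 y3 y4 p) a b -> False.
  move=> a b h1 h2; move/eqP: Hne; apply.
  exact: edge_unique HF HX HW (edge_of (HPTF _ HX) h1) h1 h2.
have u_s : u != s.
  by apply/eqP => E; apply: (EU p s); [exact: u62 | rewrite usesC -E; exact: u60].
have u_v : u != v.
  by apply/eqP => E; apply: (EU v p); [exact: u61 | rewrite -E; exact: u60].
have u_q : u != q.
  apply: ncol; apply: (@neq3 _ (c p) (c s)); [exact: col eW0 | exact: col eX2 | exact: col eX3].
have u_x0 : u != x0.
  apply: ncol; apply: (@neq3 _ (c p) (c v)); [exact: col eW0 | rewrite eq_sym; exact: col eX1 | rewrite eq_sym; exact: col eX0].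
have HPP : isP5 D (mk6 u p s q v x0).
  apply: isP5_mk6 => //; [uniqs | by rewrite orbC].
have v_y2 : v != y2.
  by apply/eqP => E; apply: (EU v p); [exact: u61 | rewrite E usesC; exact: u61].
have v_y3 : v != y3.
  apply: ncol; apply: (@neq3 _ (c p) (c y2)); [exact: col eX1 | exact: col eW1 | exact: col eW2].
have v_y4 : v != y4.
  by apply/eqP => E; apply: (EU v p); [exact: u61 | rewrite E; exact: u64].
have HYT : isT5 D (mk6 v p y2 y3 y4 p).
  apply: isT5_mk6 => //; uniqs.
have Hu : forall a b, uses (mk6 u p s q v x0) a b + uses (mk6 v p y2 y3 y4 p) a b =
                      uses (mk6 x0 v p s q v) a b + uses (mk6 u p y2 y3 y4 p) a b.
  by move=> a b; rewrite !usesE !wvE (stC v x0); clear -a b; lia.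
have Hle : forall a b, D a b -> uses (mk6 x0 v p s q v) a b + uses (mk6 u p y2 y3 y4 p) a b <= 1.
  by move=> a b H; apply: pair_le1 HF HX HW Hne _; rewrite H.
have Hend : forall a b, M a b ->
    0 < uses (mk6 x0 v p s q v) a b + uses (mk6 u p y2 y3 y4 p) a b ->
    (deg_in (mk6 u p s q v x0) a = 1 /\ 0 < uses (mk6 u p s q v x0) a b) \/
    (deg_in (mk6 v p y2 y3 y4 p) a = 1 /\ 0 < uses (mk6 v p y2 y3 y4 p) a b).
  move=> a b Mab; rewrite addn_gt0 => /orP [h|h].
  - have hd := HMC a b Mab _ HX h.
    have [Ea Eb] := endT5 HXT hd h; rewrite !wvE in Ea Eb; subst a b.
    left; split; first by have := degP5_5 HPP; rewrite !wvE.
    by rewrite usesC; exact: u64.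
  - have hd := HMC a b Mab _ HW h.
    have [Ea Eb] := endT5 HWT hd h; rewrite !wvE in Ea Eb; subst a b.
    left; split; first by have := degP5_0 HPP; rewrite !wvE.
    exact: u60.
have [MP MY] := newM MD Hu Hle Hend.
have Mvp : M v p = false.
  apply/negP => H; have hd := HMC v p H _ HX (u61 _ _ _ _ _ _).
  have [E _] := endT5 HXT hd (u61 _ _ _ _ _ _); rewrite !wvE in E.
  by move/eqP: E; rewrite eq_sym; apply/negP; neqs.
have [HPT1 HMC1 Hmu1 _] := swap HPT HMC HX HW Hne (or_introl HPP) (or_intror HYT) Hu MP MY.
apply: IHmu HPT1 HMC1 _.
have wX : wt (mk6 x0 v p s q v) = (M x0 v).+1 by rewrite /wt !wvE eqxx.
have wW : wt (mk6 u p y2 y3 y4 p) = 2 by rewrite /wt !wvE eqxx Mup.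
have wP : wt (mk6 u p s q v x0) = M x0 v.
  have x0_p : x0 != p by neqs.
  by rewrite /wt !wvE (negbTE x0_p) Mup.
have wY : wt (mk6 v p y2 y3 y4 p) = 1 by rewrite /wt !wvE eqxx Mvp.
move: Hmu1; rewrite wX wW wP wY Hmu.
move: (mu _) (M x0 v) => m b; clear; case: b => /=; lia.
Qed.


Lemma stepBC n k F x0 v p s q u W y2 y3 y4 y5 :
  (forall F', PT_decomposition D F' -> M_complete D M F' -> mu F' < n -> G) ->
  Sk n k ->
  PT_decomposition D F -> M_complete D M F -> mu F = n ->
  mk6 x0 v p s q v \in F -> isT5 D (mk6 x0 v p s q v) ->
  M u p -> W \in F -> mk6 x0 v p s q v != W -> isP5 D W ->
  isP5 D (mk6 u p y2 y3 y4 y5) ->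
  (forall a b, uses W a b = uses (mk6 u p y2 y3 y4 y5) a b) ->
  (forall a, deg_in W a = deg_in (mk6 u p y2 y3 y4 y5) a) ->
  wt W = wt (mk6 u p y2 y3 y4 y5) ->
  (wv W 1 = p /\ wv W 4 = y4) \/ (wv W 4 = p /\ wv W 1 = y4) ->
  G \/ exists ys, size ys = k.+1 /\ chainN F v (p :: ys).
Proof.
move=> IHmu IHk HPT HMC Hmu HX HXT Mup HW Hne HWP HWP' HWe HWd Hwt Hlink.
have [HPTF HF] := HPT.
have UX := uniq_T5 HXT; rewrite !wvE in UX; explode UX.
have UW := uniq_P5 HWP'; rewrite !wvE in UW; explode UW.
have eX0 := @e6 _ 0 (HPTF _ HX) isT; rewrite !wvE in eX0.
have eX1 := @e6 _ 1 (HPTF _ HX) isT; rewrite !wvE in eX1.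
have eX2 := @e6 _ 2 (HPTF _ HX) isT; rewrite !wvE in eX2.
have eX3 := @e6 _ 3 (HPTF _ HX) isT; rewrite !wvE in eX3.
have eX4 := @e6 _ 4 (HPTF _ HX) isT; rewrite !wvE in eX4.
have eW0 := @e6 _ 0 (or_introl HWP') isT; rewrite !wvE in eW0.
have eW1 := @e6 _ 1 (or_introl HWP') isT; rewrite !wvE in eW1.
have eW2 := @e6 _ 2 (or_introl HWP') isT; rewrite !wvE in eW2.
have eW3 := @e6 _ 3 (or_introl HWP') isT; rewrite !wvE in eW3.
have eW4 := @e6 _ 4 (or_introl HWP') isT; rewrite !wvE in eW4.
have EU : forall a b, 0 < uses (mk6 x0 v p s q v) a b -> 0 < uses (mk6 u p y2 y3 y4 y5) a b -> False.
  move=> a b h1; rewrite -HWe => h2; move/eqP: Hne; apply.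
  exact: edge_unique HF HX HW (edge_of (HPTF _ HX) h1) h1 h2.
have HMCW : forall a b, M a b -> 0 < uses (mk6 u p y2 y3 y4 y5) a b ->
    deg_in (mk6 u p y2 y3 y4 y5) a = 1.
  by move=> a b Mab h; rewrite -HWd; apply: (HMC a b Mab _ HW); rewrite HWe.
have u_s : u != s.
  by apply/eqP => E; apply: (EU p s); [exact: u62 | rewrite usesC -E; exact: u60].
have u_v : u != v.
  by apply/eqP => E; apply: (EU v p); [exact: u61 | rewrite -E; exact: u60].
have u_q : u != q.
  apply: ncol; apply: (@neq3 _ (c p) (c s)); [exact: col eW0 | exact: col eX2 | exact: col eX3].
have u_x0 : u != x0.
  apply: ncol; apply: (@neq3 _ (c p) (c v)); [exact: col eW0 | rewrite eq_sym; exact: col eX1 | rewrite eq_sym; exact: col eX0].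
have HPP : isP5 D (mk6 u p s q v x0).
  apply: isP5_mk6 => //; [uniqs | by rewrite orbC].
have v_y2 : v != y2.
  by apply/eqP => E; apply: (EU v p); [exact: u61 | rewrite E usesC; exact: u61].
have Hle : forall a b, D a b -> uses (mk6 x0 v p s q v) a b + uses W a b <= 1.
  by move=> a b H; apply: pair_le1 HF HX HW Hne _; rewrite H.
have Mvp : M v p = false.
  apply/negP => H; have hd := HMC v p H _ HX (u61 _ _ _ _ _ _).
  have [E _] := endT5 HXT hd (u61 _ _ _ _ _ _); rewrite !wvE in E.
  by move/eqP: E; rewrite eq_sym; apply/negP; neqs.
have wX : wt (mk6 x0 v p s q v) = (M x0 v).+1 by rewrite /wt !wvE eqxx.
have wP : wt (mk6 u p s q v x0) = M x0 v.
  have x0_p : x0 != p by neqs.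
  by rewrite /wt !wvE (negbTE x0_p) Mup.
have y5_p : y5 != p by neqs.
have wW : wt W = M y5 y4 by rewrite Hwt /wt !wvE (negbTE y5_p) Mup.
have endX : forall a b, M a b -> 0 < uses (mk6 x0 v p s q v) a b -> a = x0 /\ b = v.
  move=> a b Mab h; have hd := HMC a b Mab _ HX h.
  by have [Ea Eb] := endT5 HXT hd h; rewrite !wvE in Ea Eb.
have endW : forall a b, M a b -> 0 < uses W a b -> (a = u /\ b = p) \/ (a = y5 /\ b = y4).
  move=> a b Mab; rewrite HWe => h; have hd := HMCW a b Mab h.
  by have := endP5 HWP' hd h; rewrite !wvE.
case: (eqVneq y4 v) => [E|Hy4].
-
  subst y4.
  have HYT : isT5 D (mk6 y5 v y3 y2 p v).
    apply: isT5_mk6; try by rewrite orbC.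
    uniqs.
  have Hu : forall a b, uses (mk6 u p s q v x0) a b + uses (mk6 y5 v y3 y2 p v) a b =
                        uses (mk6 x0 v p s q v) a b + uses W a b.
    move=> a b; rewrite HWe !usesE !wvE (stC v x0) (stC y5 v) (stC v y3) (stC y3 y2) (stC y2 p) (stC p v).
    by clear -a b; lia.
  have Hend : forall a b, M a b ->
      0 < uses (mk6 x0 v p s q v) a b + uses W a b ->
      (deg_in (mk6 u p s q v x0) a = 1 /\ 0 < uses (mk6 u p s q v x0) a b) \/
      (deg_in (mk6 y5 v y3 y2 p v) a = 1 /\ 0 < uses (mk6 y5 v y3 y2 p v) a b).
    move=> a b Mab; rewrite addn_gt0 => /orP [h|h].
    + have [-> ->] := endX a b Mab h.
      left; split; first by have := degP5_5 HPP; rewrite !wvE.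
      by rewrite usesC; exact: u64.
    + case: (endW a b Mab h) => [[-> ->]|[-> ->]].
      * left; split; first by have := degP5_0 HPP; rewrite !wvE.
        exact: u60.
      * right; split; first by have := degT5_0 HYT; rewrite !wvE.
        exact: u60.
  have [MP MY] := newM MD Hu Hle Hend.
  have [HPT1 HMC1 Hmu1 Hmem] := swap HPT HMC HX HW Hne (or_introl HPP) (or_intror HYT) Hu MP MY.
  have wY : wt (mk6 y5 v y3 y2 p v) = (M y5 v).+1 by rewrite /wt !wvE eqxx.
  have Hmu1' : mu (mk6 u p s q v x0 :: mk6 y5 v y3 y2 p v :: rem W (rem (mk6 x0 v p s q v) F)) = n.
    move: Hmu1; rewrite wX wW wP wY Hmu.
    move: (mu _) (M x0 v) (M y5 v) => m b1 b2; clear; case: b1; case: b2 => /=; lia.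
  have HYin : mk6 y5 v y3 y2 p v \in mk6 u p s q v x0 :: mk6 y5 v y3 y2 p v :: rem W (rem (mk6 x0 v p s q v) F).
    by rewrite !inE eqxx orbT.
  case: (IHk _ _ _ _ _ _ HPT1 HMC1 Hmu1' HYin) => [HG|[ys [Hsz Hch]]]; first by left.
  right; exists (y3 :: ys); split; first by rewrite /= Hsz.
  move=> [|i] Hi.
  + exists W => //; split => //.
    by rewrite HWe usesC; exact: u63.
  + have := Hch i Hi; rewrite [nth _ _ i.+1]/=.
    case=> w Hw [HPw Hpos Huw].
    case: (Hmem w Hw) => [Ew|[Ew|HwF]].
    * subst w; rewrite !wvE in Hpos.
      exfalso; case: Hpos => [[Ep _]|[_ Ep]]; last by move/eqP: Ep; apply/negP; neqs.
      have Hin : p \in y3 :: ys by rewrite Ep; apply: mem_nth; apply: ltnW.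
      have Hnot : p \notin ys.
        apply: (chain_notin HPT1 Hch (Z := mk6 y5 v y3 y2 p v)) => //; first by rewrite !wvE.
        by rewrite usesC; exact: u64.
      move: Hin; rewrite inE (negbTE Hnot) orbF; apply/negP; neqs.
    * by subst w; exfalso; apply: (P5_notT5 HPw); rewrite !wvE.
    * by exists w.
-
  left.
  have v_y3 : v != y3.
    apply: ncol; apply: (@neq3 _ (c p) (c y2)); [exact: col eX1 | exact: col eW1 | exact: col eW2].
  have v_y5 : v != y5.
    apply: ncol; apply: (@neq5 _ (c p) (c y2) (c y3) (c y4));
      [exact: col eX1 | exact: col eW1 | exact: col eW2 | exact: col eW3 | exact: col eW4].
  have HYP : isP5 D (mk6 v p y2 y3 y4 y5).
    apply: isP5_mk6 => //; uniqs.
  have Hu : forall a b, uses (mk6 u p s q v x0) a b + uses (mk6 v p y2 y3 y4 y5) a b =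
                        uses (mk6 x0 v p s q v) a b + uses W a b.
    move=> a b; rewrite HWe !usesE !wvE (stC v x0).
    by clear -a b; lia.
  have Hend : forall a b, M a b ->
      0 < uses (mk6 x0 v p s q v) a b + uses W a b ->
      (deg_in (mk6 u p s q v x0) a = 1 /\ 0 < uses (mk6 u p s q v x0) a b) \/
      (deg_in (mk6 v p y2 y3 y4 y5) a = 1 /\ 0 < uses (mk6 v p y2 y3 y4 y5) a b).
    move=> a b Mab; rewrite addn_gt0 => /orP [h|h].
    + have [-> ->] := endX a b Mab h.
      left; split; first by have := degP5_5 HPP; rewrite !wvE.
      by rewrite usesC; exact: u64.
    + case: (endW a b Mab h) => [[-> ->]|[-> ->]].
      * left; split; first by have := degP5_0 HPP; rewrite !wvE.
        exact: u60.
      * right; split; first by have := degP5_5 HYP; rewrite !wvE.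
        by rewrite usesC; exact: u64.
  have [MP MY] := newM MD Hu Hle Hend.
  have [HPT1 HMC1 Hmu1 _] := swap HPT HMC HX HW Hne (or_introl HPP) (or_introl HYP) Hu MP MY.
  apply: IHmu HPT1 HMC1 _.
  have y5_p' : y5 != p by neqs.
  have wY : wt (mk6 v p y2 y3 y4 y5) = 0 by rewrite /wt !wvE (negbTE y5_p') Mvp.
  move: Hmu1; rewrite wX wW wP wY Hmu.
  move: (mu _) (M x0 v) (M y5 y4) => m b1 b2; clear; case: b1; case: b2 => /=; lia.
Qed.


Definition rv w := mk6 (wv w 5) (wv w 4) (wv w 3) (wv w 2) (wv w 1) (wv w 0).

Lemma uses_rev w a b : uses w a b = uses (rv w) a b.
Proof.
rewrite /rv !usesE !wvE (stC (wv w 5) (wv w 4)) (stC (wv w 4) (wv w 3)) (stC (wv w 3) (wv w 2)) (stC (wv w 2) (wv w 1)) (stC (wv w 1) (wv w 0)).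
by clear; lia.
Qed.

Lemma deg_rev w a : deg_in w a = deg_in (rv w) a.
Proof.
rewrite /rv !degE !wvE (orbC (wv w 5 == a) (wv w 4 == a)) (orbC (wv w 4 == a) (wv w 3 == a))
  (orbC (wv w 3 == a) (wv w 2 == a)) (orbC (wv w 2 == a) (wv w 1 == a)) (orbC (wv w 1 == a) (wv w 0 == a)).
by clear; lia.
Qed.

Lemma P5_rev w : isP5 D w -> isP5 D (rv w).
Proof.
move=> HP; have U := uniq_P5 HP.
have E := fun i (Hi : i < 5) => e6 (or_introl HP) Hi.
apply: isP5_mk6.
- by rewrite -rev_uniq.
- by rewrite orbC; apply: E.
- by rewrite orbC; apply: E.
- by rewrite orbC; apply: E.
- by rewrite orbC; apply: E.
- by rewrite orbC; apply: E.
Qed.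

Lemma wt_rev w : isP5 D w -> wt w = wt (rv w).
Proof.
move=> HP; have HP' := P5_rev HP.
rewrite /wt; rewrite (P5_eq HP) // (P5_eq HP') //= /rv !wvE.
by rewrite andbC.
Qed.

Lemma stepS n k :
  (forall F', PT_decomposition D F' -> M_complete D M F' -> mu F' < n -> G) ->
  Sk n k -> Sk n k.+1.
Proof.
move=> IHmu IHk F x0 v p s q HPT HMC Hmu HX.
have [HPTF HF] := HPT.
have HXT : isT5 D (mk6 x0 v p s q v).
  case: (HPTF _ HX) => // HP; exfalso; apply: (P5_notT5 HP); by rewrite !wvE.
have UX := uniq_T5 HXT; rewrite !wvE in UX; explode UX.
have [u Mup] := Min p.
have Dup := MD Mup.
have [W HW HuW] : exists2 W, W \in F & 0 < uses W u p.
  by apply: suses_pos; rewrite /suses (HF u p Dup).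
have hd := HMC u p Mup W HW HuW.
have Hne : mk6 x0 v p s q v != W.
  apply/eqP => E; subst W; have [_ Ep] := endT5 HXT hd HuW; rewrite !wvE in Ep.
  by move/eqP: Ep; apply/negP; neqs.
case: (HPTF _ HW) => [HWP|HWT].
- case: (endP5 HWP hd HuW) => [[Eu Ep]|[Eu Ep]].
  + apply: (stepBC IHmu IHk HPT HMC Hmu HX HXT Mup HW Hne HWP
             (y2 := wv W 2) (y3 := wv W 3) (y4 := wv W 4) (y5 := wv W 5)).
    * by rewrite Eu Ep -mk6_wv.
    * by move=> a b; rewrite Eu Ep -mk6_wv.
    * by move=> a; rewrite Eu Ep -mk6_wv.
    * by rewrite Eu Ep -mk6_wv.
    * by left; split.
  + apply: (stepBC IHmu IHk HPT HMC Hmu HX HXT Mup HW Hne HWP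
             (y2 := wv W 3) (y3 := wv W 2) (y4 := wv W 1) (y5 := wv W 0)).
    * by rewrite Eu Ep; apply: P5_rev.
    * by move=> a b; rewrite Eu Ep; apply: uses_rev.
    * by move=> a; rewrite Eu Ep; apply: deg_rev.
    * by rewrite Eu Ep; apply: wt_rev.
    * by right; split.
- have [Eu Ep] := endT5 HWT hd HuW.
  have H51 : wv W 5 = wv W 1 by case: HWT => _ [].
  have EW : W = mk6 u p (wv W 2) (wv W 3) (wv W 4) p.
    by rewrite Eu Ep {1}(mk6_wv W) H51.
  rewrite EW in HW HWT Hne.
  left; exact: stepA IHmu HPT HMC Hmu HX HXT Mup HW HWT Hne.
Qed.

End Basics.

Lemma key (V : finType) (D M : rel V) (c : V -> bool)
  (Hc : forall a b, D a b -> c a != c b)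
  (MD : forall a b, M a b -> D a b) (Min : forall v, exists u, M u v) :
  forall n F, PT_decomposition D F -> M_complete D M F -> mu M F = n ->
  exists F, P5_decomposition D F.
Proof.
elim/ltn_ind => n IH F HPT HMC Hmu.
set G := exists F, P5_decomposition D F.
have IHmu : forall F', PT_decomposition D F' -> M_complete D M F' -> mu M F' < n -> G.
  by move=> F' H1 H2 H3; apply: (IH _ H3 F' H1 H2).
have Sall : forall k, Sk D M G n k.
  elim=> [|k IHk]; last exact: (stepS Hc MD Min IHmu IHk).
  by move=> F1 x0 v p s q _ _ _ _; right; exists [::]; split => // i.
case: (boolP (has (fun w => wv w 5 == wv w 1) F)) => [/hasP [X HX /eqP H51]|Hno].
- rewrite (mk6_wv X) H51 in HX.
  case: (Sall #|V| F _ _ _ _ _ HPT HMC Hmu HX) => // [[ys [Hsz Hch]]].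
  exfalso.
  have U : uniq (wv X 2 :: ys).
    apply: (chain_uniq HPT Hch HX); first by rewrite !wvE.
    exact: u61.
  move/card_uniqP: U => Hcard.
  have := max_card (mem (wv X 2 :: ys)).
  by rewrite Hcard /= Hsz ltnn.
- exists F; split; last by case: HPT.
  move=> w Hw; case: HPT => HPT _; case: (HPT w Hw) => // [[_ [_ H]]].
  by move/hasPn: Hno => /(_ w Hw); rewrite H eqxx.
Qed.

Theorem mainTheorem6 (V : finType) (D M : rel V) :
  simple_digraph D ->
  bipartite_digraph D ->
  (forall a b, M a b -> D a b) ->
  (forall v, exists u, M u v) ->
  (exists F, PT_decomposition D F /\ M_complete D M F) ->
  exists F, P5_decomposition D F.
Proof.
move=> _ [c Hc] MD Min [F [HPT HMC]].
exact: (key Hc MD Min HPT HMC erefl).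
Qed.
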